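(* Let $B$ be an infinite set and assume $2^{2^{|B|}}=(2^{|B|})^+$. Let $(E,\mathcal L)$ be a local representation over $B$ with $|E|=2^{2^{|B|}}$ which is $(2^{|B|})^+$-exact (such exists). Let $B'\subseteq B$ be infinite and $E'=\{e\in E:\{\psi\in B^E:\psi_e\in B'\}\in\mathcal L\}$ with its sub-local-representation structure over $B'$. Then $E'$ is a regular local representation over $B'$ of cardinality $2^{2^{|B|}}$.
   Context: A local representation over $B$ is $(E,\mathcal L)$ with $\mathcal L$ an ultrafilter on the cylinder Boolean algebra of $B^E$ (sets $\{\psi\in B^E:(\psi_{e_1},\dots,\psi_{e_n})\in R\}$, $e_i\in E$, $R\subseteq B^n$). The sub-local-representation structure on $E'$ over $B'$ is the ultrafilter $\mathcal L'$ on the cylinders of $B'^{E'}$ with $\{\psi':(\psi'_{e_1},\dots,\psi'_{e_n})\in R\}\in\mathcal L'$ iff $\{\psi\in B^E:(\psi_{e_1},\dots,\psi_{e_n})\in R\}\in\mathcal L$ ($e_i\in E'$, $R\subseteq B'^n$). Separated: $\{\psi:\psi_{e_1}=\psi_{e_2}\}\in\mathcal L$ only if $e_1=e_2$. For $\eta:I\to E$, the pullback of $\mathcal L$ by $\eta$ is the ultrafilter of cylinders $C\subseteq B^I$ with $\{\psi:(\psi_{\eta(i)})_{i\in I}\in C\}\in\mathcal L$; projection to $B^I$ of an ultrafilter on the cylinders of $B^{I\cup\{i_0\}}$ ($i_0\notin I$) consists of the cylinders of $B^I$ whose preimage under restriction lies in it. For an infinite cardinal $\mathfrak m$, $(E,\mathcal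 L)$ is $\mathfrak m$-exact if it is separated and for every $I$ with $|I|<\mathfrak m$, $i_0\notin I$, $\eta:I\to E$, and ultrafilter $\mathcal U$ on the cylinders of $B^{I\cup\{i_0\}}$ projecting to the pullback of $\mathcal L$ by $\eta$, there is $e\in E$ with the pullback of $\mathcal L$ by $\eta\cup\{i_0\mapsto e\}$ equal to $\mathcal U$. Regular means $|E|$-exact. *)

(* Defs.v *)
From Stdlib Require Import List.
Import ListNotations.
Set Implicit Arguments.

Definition injective {X Y : Type} (f : X -> Y) : Prop :=
  forall x y, f x = f y -> x = y.
Definition card_le (X Y : Type) : Prop := exists f : X -> Y, injective f.
Definition card_lt (X Y : Type) : Prop := card_le X Y /\ ~ card_le Y X.
Definition card_eq (X Y : Type) : Prop :=
  exists f : X -> Y, injective f /\ forall y, exists x, f x = y.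
Definition infinite (X : Type) : Prop := ~ exists l : list X, forall x, In x l.

Definition pow (X : Type) : Type := X -> Prop.

(* |I| < (2^|B|)^+, i.e. |I| <= 2^|B| (definition of the successor cardinal) *)
Definition lt_succ_pow (B I : Type) : Prop := card_le I (pow B).

(* 2^(2^|B|) = (2^|B|)^+ : every cardinal strictly below 2^(2^|B|)
   (represented by a subset of 2^(2^|B|)) is at most 2^|B|. *)
Definition gch_at (B : Type) : Prop :=
  forall S : pow (pow B) -> Prop,
    ~ card_le (pow (pow B)) {x | S x} -> card_le {x | S x} (pow B).

Definition cylinder {E B : Type} (C : (E -> B) -> Prop) : Prop :=
  exists (es : list E) (R : list B -> Prop), forall psi, C psi <-> R (map psi es).

Record cyl_ultrafilter {E B : Type} (L : ((E -> B) -> Prop) -> Prop) : Prop := {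
  uf_cyl : forall C, L C -> cylinder C;
  uf_full : L (fun _ => True);
  uf_proper : ~ L (fun _ => False);
  uf_up : forall C D, L C -> cylinder D -> (forall psi, C psi -> D psi) -> L D;
  uf_meet : forall C D, L C -> L D -> L (fun psi => C psi /\ D psi);
  uf_ultra : forall C, cylinder C -> L C \/ L (fun psi => ~ C psi)
}.

Definition local_rep {E B : Type} (L : ((E -> B) -> Prop) -> Prop) : Prop :=
  cyl_ultrafilter L.

Definition separated {E B : Type} (L : ((E -> B) -> Prop) -> Prop) : Prop :=
  forall e1 e2, L (fun psi => psi e1 = psi e2) -> e1 = e2.

Definition pullback {I E B : Type} (eta : I -> E) (L : ((E -> B) -> Prop) -> Prop)
  : ((I -> B) -> Prop) -> Prop :=
  fun C => cylinder C /\ L (fun psi => C (fun i => psi (eta i))).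

(* I \cup {i0} is modelled by option I, with i0 = None;
   projection of an ultrafilter on cylinders of B^(option I) to B^I *)
Definition proj_opt {I B : Type} (U : ((option I -> B) -> Prop) -> Prop)
  : ((I -> B) -> Prop) -> Prop :=
  fun C => cylinder C /\ U (fun phi => C (fun i => phi (Some i))).

Definition extend {I E : Type} (eta : I -> E) (e : E) : option I -> E :=
  fun o => match o with Some i => eta i | None => e end.

(* exactness with respect to a cardinal m, where [small I] means |I| < m *)
Definition exact_wrt {E B : Type} (small : Type -> Prop)
  (L : ((E -> B) -> Prop) -> Prop) : Prop :=
  separated L /\
  forall (I : Type), small I ->
  forall (eta : I -> E) (U : ((option I -> B) -> Prop) -> Prop),
    cyl_ultrafilter U ->
    (forall C, proj_opt U C <-> pullback eta L C) ->
    exists e : E, forall C, pullback (extend eta e) L C <-> U C.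

Definition regular {E B : Type} (L : ((E -> B) -> Prop) -> Prop) : Prop :=
  exact_wrt (fun I : Type => card_lt I E) L.

Definition sub_domain {E B : Type} (L : ((E -> B) -> Prop) -> Prop) (B' : B -> Prop)
  : E -> Prop := fun e => L (fun psi => B' (psi e)).

Definition sub_rep {E B : Type} (L : ((E -> B) -> Prop) -> Prop)
  (E' : E -> Prop) (B' : B -> Prop)
  : (({e | E' e} -> {b | B' b}) -> Prop) -> Prop :=
  fun C' => exists (es : list {e | E' e}) (R : list {b | B' b} -> Prop),
    (forall psi', C' psi' <-> R (map psi' es)) /\
    L (fun psi => exists bs : list {b | B' b},
          map (@proj1_sig _ _) bs = map (fun e => psi (proj1_sig e)) es /\ R bs).

(* Main.v *)
Require Import Defs.
From Stdlib Require Import List Classical ClassicalEpsilon FunctionalExtensionality PropExtensionality ProofIrrelevance.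
Import ListNotations.

Lemma cyl_map {J B : Type} (K : list B -> Prop) (js : list J) :
  cylinder (fun phi : J -> B => K (map phi js)).
Proof. exists js, K; intros; tauto. Qed.

Lemma cyl_gen {J J' B B2 : Type} (C : (J -> B) -> Prop) (k : J -> J') (v : B2 -> B) :
  cylinder C -> cylinder (fun phi : J' -> B2 => C (fun j => v (phi (k j)))).
Proof.
intros [js [R HR]]. exists (map k js), (fun l => R (map v l)).
intros phi. rewrite HR, !map_map. tauto.
Qed.

Lemma cyl_not {J B : Type} (C : (J -> B) -> Prop) : cylinder C -> cylinder (fun phi => ~ C phi).
Proof. intros [js [R HR]]. exists js, (fun l => ~ R l). intros phi; rewrite HR; tauto. Qed.

Lemma firstn_map_app {J B} (f : J -> B) (l1 l2 : list J) :
  firstn (length l1) (map f (l1 ++ l2)) = map f l1 /\ skipn (length l1) (map f (l1 ++ l2)) = map f l2.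
Proof. induction l1; simpl; auto. destruct IHl1 as [H1 H2]; rewrite H1, H2; auto. Qed.

Lemma cyl_and {J B : Type} (C D : (J -> B) -> Prop) : cylinder C -> cylinder D ->
  cylinder (fun phi => C phi /\ D phi).
Proof.
intros [js [R HR]] [ks [S HS]]. exists (js ++ ks), (fun l => R (firstn (length js) l) /\ S (skipn (length js) l)).
intros phi. destruct (firstn_map_app phi js ks) as [H1 H2]. rewrite H1, H2, HR, HS. tauto.
Qed.

Lemma cyl_True {J B : Type} : cylinder (fun _ : J -> B => True).
Proof. exists [], (fun _ => True); tauto. Qed.
Lemma cyl_False {J B : Type} : cylinder (fun _ : J -> B => False).
Proof. exists [], (fun _ => False); tauto. Qed.

Lemma uf_iff {J B : Type} (L : ((J -> B) -> Prop) -> Prop) (G X Y : (J -> B) -> Prop) :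
  cyl_ultrafilter L -> L G -> cylinder X -> cylinder Y ->
  (forall psi, G psi -> (X psi <-> Y psi)) -> (L X <-> L Y).
Proof.
intros HL HG HX HY H; split; intro H0.
- apply (uf_up HL (fun psi => X psi /\ G psi)); auto. apply uf_meet; auto.
  intros psi [a b]; apply H; auto.
- apply (uf_up HL (fun psi => Y psi /\ G psi)); auto. apply uf_meet; auto.
  intros psi [a b]; apply H; auto.
Qed.

Lemma uf_iff' {J B : Type} (L : ((J -> B) -> Prop) -> Prop) (X Y : (J -> B) -> Prop) :
  cyl_ultrafilter L -> cylinder X -> cylinder Y ->
  (forall psi, X psi <-> Y psi) -> (L X <-> L Y).
Proof.
intros HL HX HY H; apply (uf_iff L (fun _ => True)); auto. apply uf_full; auto.
Qed.

Lemma sig_eq {X : Type} (P : X -> Prop) (a b : {x | P x}) : proj1_sig a = proj1_sig b -> a = b.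
Proof. destruct a, b; simpl; intros ->; f_equal; apply proof_irrelevance. Qed.

Lemma map_val_inj {X : Type} (P : X -> Prop) (l1 l2 : list {x | P x}) :
  map (@proj1_sig _ _) l1 = map (@proj1_sig _ _) l2 -> l1 = l2.
Proof.
revert l2; induction l1; destruct l2; simpl; intros H; try discriminate; auto.
injection H; intros; f_equal; auto. apply sig_eq; auto.
Qed.

Lemma up' {J B : Type} {L : ((J -> B) -> Prop) -> Prop} {C D : (J -> B) -> Prop} :
  cyl_ultrafilter L -> L C -> cylinder D -> (forall psi, C psi -> D psi) -> L D.
Proof. intros HL; apply (uf_up HL). Qed.
Lemma ultra' {J B : Type} {L : ((J -> B) -> Prop) -> Prop} (C : (J -> B) -> Prop) :
  cyl_ultrafilter L -> cylinder C -> L C \/ L (fun psi => ~ C psi).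
Proof. intros HL; apply (uf_ultra HL). Qed.

Lemma map_combine_opt {J E B : Type} (F : J -> E) (e0 : E) (psi : E -> B) (b : B) (os : list (option J)) :
  map (fun o => match o with Some j => psi (F j) | None => b end) os =
  map (fun p : option J * B => match fst p with Some _ => snd p | None => b end)
      (combine os (map psi (map (fun o => match o with Some j => F j | None => e0 end) os))).
Proof. induction os as [|[j|] os IH]; simpl; f_equal; auto. Qed.

Lemma cyl_W {J E B : Type} (F : J -> E) (e0 : E) (W : (B -> Prop) -> Prop) (D : (option J -> B) -> Prop) :
  cylinder D -> cylinder (fun psi : E -> B => W (fun b => D (fun o => match o with Some j => psi (F j) | None => b end))).
Proof.
intros [os [R HR]].
exists (map (fun o => match o with Some j => F j | None => e0 end) os),
  (fun vs => W (fun b => R (map (fun p : option J * B => match fst p with Some _ => snd p | None => b end) (combine os vs)))).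
intros psi.
assert (H : (fun b => D (fun o => match o with Some j => psi (F j) | None => b end)) =
  (fun b => R (map (fun p : option J * B => match fst p with Some _ => snd p | None => b end)
      (combine os (map psi (map (fun o => match o with Some j => F j | None => e0 end) os)))))).
{ extensionality b; apply propositional_extensionality. rewrite HR, (map_combine_opt F e0). tauto. }
rewrite H; tauto.
Qed.

Record wuf {B : Type} (B' : B -> Prop) (W : (B -> Prop) -> Prop) : Prop := {
  w_B' : W B';
  w_ne : forall b, W (fun x => x <> b);
  w_proper : ~ W (fun _ => False);
  w_up : forall X Y, W X -> (forall x, X x -> Y x) -> W Y;
  w_meet : forall X Y, W X -> W Y -> W (fun x => X x /\ Y x);
  w_ultra : forall X, W X \/ W (fun x => ~ X x)
}.

Lemma gch_le (B I : Type) (k : I -> pow (pow B)) : injective k -> gch_at B ->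
  ~ card_le (pow (pow B)) I -> card_le I (pow B).
Proof.
intros Hk Hg Hn.
set (S := fun x => exists i, k i = x).
destruct (Hg S) as [g Hgi].
- intros [h Hh]. apply Hn.
  exists (fun x => proj1_sig (constructive_indefinite_description _ (proj2_sig (h x)))).
  intros x y Hxy. apply Hh. apply sig_eq.
  destruct (constructive_indefinite_description _ (proj2_sig (h x))) as [i1 Hi1].
  destruct (constructive_indefinite_description _ (proj2_sig (h y))) as [i2 Hi2].
  simpl in Hxy. subst. rewrite <- Hi1, <- Hi2; reflexivity.
- exists (fun i => g (exist S (k i) (ex_intro _ i eq_refl))).
  intros x y H. apply Hgi in H. apply Hk. exact (f_equal (@proj1_sig _ _) H).
Qed.

Lemma inj_comp {X Y Z : Type} (f : X -> Y) (g : Y -> Z) : injective f -> injective g -> injective (fun x => g (f x)).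
Proof. intros Hf Hg x y H; auto. Qed.

Lemma SB (X Y : Type) : card_le X Y -> card_le Y X -> card_eq X Y.
Proof.
intros [f Hf] [g Hg].
set (Cn := fix Cn (n : nat) : X -> Prop :=
  match n with O => fun x => ~ exists y, g y = x | S m => fun x => exists x', Cn m x' /\ g (f x') = x end).
set (C := fun x => exists n, Cn n x).
assert (Hng : forall x, ~ C x -> exists y, g y = x).
{ intros x Hx. apply NNPP; intro H; apply Hx; exists O; exact H. }
set (h := fun x => match excluded_middle_informative (C x) with
  | left _ => f x
  | right H => proj1_sig (constructive_indefinite_description _ (Hng x H)) end).
exists h. split.
- intros x1 x2. unfold h.
  destruct excluded_middle_informative as [c1|c1]; destruct excluded_middle_informative as [c2|c2].
  + apply Hf.
  + destruct constructive_indefinite_description as [y2 Hy2]; simpl. intros E.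
    exfalso; apply c2. destruct c1 as [n Hn]. exists (S n). exists x1; split; auto. rewrite E; auto.
  + destruct constructive_indefinite_description as [y1 Hy1]; simpl. intros E.
    exfalso; apply c1. destruct c2 as [n Hn]. exists (S n). exists x2; split; auto. rewrite <- E; auto.
  + destruct constructive_indefinite_description as [y1 Hy1]; destruct constructive_indefinite_description as [y2 Hy2]; simpl.
    intros E; subst; auto.
- intros y. destruct (classic (C (g y))) as [Hc|Hc].
  + destruct Hc as [[|n] Hn].
    * exfalso; apply Hn; exists y; auto.
    * destruct Hn as [x' [Hx' E]]. apply Hg in E. exists x'. unfold h.
      destruct excluded_middle_informative as [c|c]; auto. exfalso; apply c; exists n; auto.
  + exists (g y). unfold h. destruct excluded_middle_informative as [c|c]; [contradiction|].
    destruct constructive_indefinite_description as [y' Hy']; simpl. apply Hg; auto.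
Qed.
Arguments w_B' {B B' W}. Arguments w_ne {B B' W}. Arguments w_proper {B B' W}.
Arguments w_up {B B' W}. Arguments w_meet {B B' W}. Arguments w_ultra {B B' W}.


Section Main.
Variables (B E : Type) (L : ((E -> B) -> Prop) -> Prop) (B' : B -> Prop).
Hypothesis HL : cyl_ultrafilter L.
Variable b0 : {b | B' b}.

Local Notation E' := (sub_domain L B').
Local Notation L' := (sub_rep L (sub_domain L B') B').
Local Notation Ety := {e | sub_domain L B' e}.
Local Notation Bty := {b | B' b}.

Definition liftb (b : B) : Bty :=
  match excluded_middle_informative (B' b) with
  | left h => exist _ b h | right _ => b0 end.

Lemma liftb_val (b : Bty) : liftb (proj1_sig b) = b.
Proof.
unfold liftb; destruct excluded_middle_informative as [h|h].
- apply sig_eq; reflexivity.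
- destruct b; contradiction.
Qed.

Lemma val_liftb (b : B) : B' b -> proj1_sig (liftb b) = b.
Proof. unfold liftb; destruct excluded_middle_informative; simpl; tauto. Qed.

Definition Phi (C' : (Ety -> Bty) -> Prop) : (E -> B) -> Prop :=
  fun psi => C' (fun e => liftb (psi (proj1_sig e))).

Lemma cyl_Phi C' : cylinder C' -> cylinder (Phi C').
Proof. intros H. exact (cyl_gen C' (@proj1_sig _ _) liftb H). Qed.

Definition Gset (es : list E) : (E -> B) -> Prop := fun psi => forall e, In e es -> B' (psi e).

Lemma L_Gset (es : list E) : (forall e, In e es -> E' e) -> L (Gset es).
Proof.
induction es as [|e es IH]; intros H.
- apply (uf_up HL (fun _ => True)); [apply uf_full; auto| |intros psi _ e []].
  exists [], (fun _ => True); unfold Gset; simpl; firstorder.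
- apply (uf_up HL (fun psi => B' (psi e) /\ Gset es psi)).
  + apply uf_meet; auto. apply H; left; auto. apply IH; intros; apply H; right; auto.
  + exists (e :: es), (fun l => forall y, In y l -> B' y). intros psi; unfold Gset; split.
    * intros H1 y Hy. apply in_map_iff in Hy. destruct Hy as [x [<- Hx]]; auto.
    * intros H1 x Hx; apply H1; apply in_map; auto.
  + intros psi [H1 H2] x [<-|Hx]; auto.
Qed.

Lemma Char (C' : (Ety -> Bty) -> Prop) : L' C' <-> cylinder C' /\ L (Phi C').
Proof.
split.
- intros [es [R [HR HT]]]. split. { exists es, R; auto. }
  apply (up' HL HT). { apply cyl_Phi; exists es, R; auto. }
  intros psi [bs [Hbs HRb]]. unfold Phi; apply HR.
  enough (Heq : map (fun e : Ety => liftb (psi (proj1_sig e))) es = bs) by (rewrite Heq; exact HRb).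
  assert (Hm : map (fun e : Ety => liftb (psi (proj1_sig e))) es = map liftb (map (fun e : Ety => psi (proj1_sig e)) es))
    by (rewrite map_map; reflexivity).
  rewrite Hm, <- Hbs, map_map.
  clear. induction bs; simpl; auto. rewrite liftb_val, IHbs; auto.
- intros [[es [R HR]] HP]. exists es, R; split; auto.
  apply (uf_up HL (fun psi => Phi C' psi /\ Gset (map (@proj1_sig _ _) es) psi)).
  + apply uf_meet; auto. apply L_Gset. intros e He; apply in_map_iff in He.
    destruct He as [x [<- _]]; exact (proj2_sig x).
  + exists (map (@proj1_sig _ _) es), (fun ys => exists bs : list Bty, map (@proj1_sig _ _) bs = ys /\ R bs).
    intros psi; rewrite map_map; tauto.
  + intros psi [H1 H2]. exists (map (fun e => liftb (psi (proj1_sig e))) es). split.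
    * rewrite map_map. apply map_ext_in. intros e He. apply val_liftb. apply H2. apply in_map; auto.
    * apply HR; exact H1.
Qed.

Lemma L'_uf : cyl_ultrafilter L'.
Proof.
constructor.
- intros C HC; apply Char in HC; tauto.
- apply Char; split; [apply cyl_True|]. apply uf_full; auto.
- intros H; apply Char in H. destruct H as [_ H]. apply (uf_proper HL); exact H.
- intros C D HC HD HCD. apply Char in HC; destruct HC as [_ HC]. apply Char; split; auto.
  apply (up' HL HC). apply cyl_Phi; auto. intros psi; apply HCD.
- intros C D HC HD. apply Char in HC, HD. apply Char; split.
  apply cyl_and; tauto. exact (uf_meet HL (Phi C) (Phi D) (proj2 HC) (proj2 HD)).
- intros C HC. destruct (ultra' (Phi C) HL) as [H|H]. apply cyl_Phi; auto.
  left; apply Char; auto. right; apply Char; split; auto. apply cyl_not; auto.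
Qed.

Lemma L'_sep : separated L -> separated L'.
Proof.
intros Hs e1 e2 H. apply Char in H. destruct H as [_ H].
apply sig_eq. apply Hs.
apply (uf_up HL (fun psi => Phi (fun psi' => psi' e1 = psi' e2) psi /\ Gset [proj1_sig e1; proj1_sig e2] psi)).
- apply uf_meet; auto. apply L_Gset. intros e [<-|[<-|[]]]; apply proj2_sig.
- exact (cyl_map (fun l => match l with [x;y] => x = y | _ => False end) [proj1_sig e1; proj1_sig e2]).
- intros psi [H1 H2]. unfold Phi in H1.
  rewrite <- (val_liftb (psi (proj1_sig e1))), <- (val_liftb (psi (proj1_sig e2))).
  rewrite H1; auto. apply H2; simpl; auto. apply H2; simpl; auto.
Qed.

Lemma KL (J : Type) (f : J -> Ety) (C : (J -> B) -> Prop) : cylinder C ->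
  (L' (fun psi' => C (fun j => proj1_sig (psi' (f j)))) <-> L (fun psi => C (fun j => psi (proj1_sig (f j))))).
Proof.
intros HC. rewrite Char. 
assert (Hc1 : cylinder (fun psi' : Ety -> Bty => C (fun j => proj1_sig (psi' (f j))))) by (apply cyl_gen; auto).
assert (Hc2 : cylinder (fun psi : E -> B => C (fun j => psi (proj1_sig (f j))))) by (apply cyl_gen with (v := fun x => x); auto).
destruct HC as [js [R HR]].
assert (HI : L (Phi (fun psi' : Ety -> Bty => C (fun j : J => proj1_sig (psi' (f j))))) <-> L (fun psi : E -> B => C (fun j : J => psi (proj1_sig (f j))))).
{ apply (uf_iff L (Gset (map (fun j => proj1_sig (f j)) js))); auto.
- apply L_Gset. intros e He; apply in_map_iff in He. destruct He as [x [<- _]]; exact (proj2_sig _).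
- apply cyl_Phi; auto.
- intros psi HG. unfold Phi. rewrite !HR.
  replace (map (fun x => proj1_sig (liftb (psi (proj1_sig (f x))))) js) with (map (fun x => psi (proj1_sig (f x))) js); [tauto|].
  apply map_ext_in; intros j Hj. rewrite val_liftb; auto. apply HG. apply in_map_iff; exists j; auto. }
tauto.
Qed.


Lemma regular_L' (hE : E -> pow (pow B)) : injective hE -> gch_at B ->
  exact_wrt (fun I : Type => lt_succ_pow B I) L -> regular L'.
Proof.
intros HhE Hg [Hsep Hex]. split. { apply L'_sep; auto. }
intros I [HIle HInle] eta' U' HU' Hproj'.
assert (HI : lt_succ_pow B I).
{ destruct HIle as [k Hk]. apply (gch_le B I (fun i => hE (proj1_sig (k i)))); auto.
  - apply inj_comp; auto. apply inj_comp; auto. intros x y H; apply sig_eq; auto.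
  - intros [m Hm]. apply HInle. exists (fun e => m (hE (proj1_sig e))).
    apply inj_comp; [|auto]. apply inj_comp; auto. intros x y H; apply sig_eq; auto. }
set (U := fun D : (option I -> B) -> Prop => cylinder D /\ U' (fun phi' => D (fun o => proj1_sig (phi' o)))).
assert (cylU : forall D : (option I -> B) -> Prop, cylinder D -> cylinder (fun phi' : option I -> Bty => D (fun o => proj1_sig (phi' o)))).
{ intros D HD; exact (cyl_gen D (fun o => o) (@proj1_sig _ _) HD). }
assert (HU : cyl_ultrafilter U).
{ constructor.
  - intros C [HC _]; auto.
  - split; [apply cyl_True|]. apply uf_full; auto.
  - intros [_ H]; apply (uf_proper HU'); auto.
  - intros C D [HC1 HC2] HD HCD. split; auto. apply (up' HU' HC2); auto.
  - intros C D [HC1 HC2] [HD1 HD2]. split. apply cyl_and; auto.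
    exact (uf_meet HU' _ _ HC2 HD2).
  - intros C HC. destruct (ultra' _ HU' (cylU C HC)) as [H|H].
    left; split; auto. right; split; auto. apply cyl_not; auto. }
assert (Hproj : forall C, proj_opt U C <-> pullback (fun i => proj1_sig (eta' i)) L C).
{ intros C. unfold proj_opt, pullback, U. split.
  - intros [HC [_ H]].
    assert (H2 : proj_opt U' (fun psi' : I -> Bty => C (fun i => proj1_sig (psi' i)))).
    { split; auto. exact (cyl_gen C (fun i => i) (@proj1_sig _ _) HC). }
    apply Hproj' in H2. destruct H2 as [_ H2]. split; auto.
    apply (KL I eta' C HC); auto.
  - intros [HC H]. apply (KL I eta' C HC) in H.
    assert (H2 : pullback eta' L' (fun psi' : I -> Bty => C (fun i => proj1_sig (psi' i)))).
    { split; auto. exact (cyl_gen C (fun i => i) (@proj1_sig _ _) HC). }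
    apply Hproj' in H2. destruct H2 as [_ H2]. split; auto. split; auto.
    exact (cyl_gen C Some (fun x => x) HC). }
destruct (Hex I HI (fun i => proj1_sig (eta' i)) U HU Hproj) as [e He].
assert (HeE : E' e).
{ assert (H : U (fun phi => B' (phi None))).
  { split. exact (cyl_map (fun l => match l with [x] => B' x | _ => False end) [None]).
    apply (up' HU' (uf_full HU')). exact (cylU _ (cyl_map (fun l => match l with [x] => B' x | _ => False end) [None])).
    intros phi _; exact (proj2_sig (phi None)). }
  apply He in H. destruct H as [_ H]. exact H. }
exists (exist _ e HeE). intros C'.
set (e' := exist (sub_domain L B') e HeE).
cut (cylinder C' -> (L' (fun psi => C' (fun i => psi (extend eta' e' i))) <-> U' C')).
{ intros H; split.
  - intros [H1 H2]. apply H; auto.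
  - intros H1. assert (H0 : cylinder C') by (apply (uf_cyl HU'); auto). split; auto. apply H; auto. }
intros HC'. destruct HC' as [os [R HR]] eqn:HC'e.
set (C := fun phi : option I -> B => exists bs : list Bty, map (@proj1_sig _ _) bs = map phi os /\ R bs).
assert (HC : cylinder C) by exact (cyl_map (fun ys => exists bs : list Bty, map (@proj1_sig _ _) bs = ys /\ R bs) os).
assert (HCC : forall phi', C (fun o => proj1_sig (phi' o)) <-> C' phi').
{ intros phi'; rewrite HR; unfold C; split.
  - intros [bs [Hb HRb]]. rewrite <- (map_map phi' (@proj1_sig _ _)) in Hb.
    apply map_val_inj in Hb. rewrite <- Hb; auto.
  - intros H; exists (map phi' os); rewrite map_map; auto. }
assert (S1 : U' C' <-> U C).
{ unfold U. rewrite (uf_iff' U' C' (fun phi' => C (fun o => proj1_sig (phi' o))) HU' HC' (cylU C HC)).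
  tauto. intros; rewrite HCC; tauto. }
assert (S2 : U C <-> L (fun psi => C (fun o => psi (proj1_sig (extend eta' e' o))))).
{ rewrite <- He. unfold pullback.
  assert (Hf : (fun psi : E -> B => C (fun i => psi (extend (fun i0 => proj1_sig (eta' i0)) e i))) =
               (fun psi => C (fun o => psi (proj1_sig (extend eta' e' o))))).
  { extensionality psi. f_equal. extensionality o. destruct o; reflexivity. }
  rewrite Hf; tauto. }
rewrite S1, S2, <- (KL (option I) (extend eta' e') C HC).
apply (uf_iff' _ _ _ L'_uf).
- exact (cyl_gen C' (extend eta' e') (fun x => x) HC').
- exact (cyl_gen C (extend eta' e') (@proj1_sig _ _) HC).
- intros psi. rewrite <- HCC. tauto.
Qed.

Lemma Wconst (W : (B -> Prop) -> Prop) (HW : wuf B' W) (P : Prop) : W (fun _ => P) <-> P.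
Proof.
split.
- intros H. apply NNPP; intro Hn. apply (w_proper HW). apply (w_up HW _ _ H). auto.
- intros H. apply (w_up HW _ _ (w_B' HW)); auto.
Qed.

Lemma not_small (e0 : E) (W : (B -> Prop) -> Prop) (HW : wuf B' W) :
  exact_wrt (fun I : Type => lt_succ_pow B I) L -> ~ card_le Ety (pow B).
Proof.
intros [Hsep Hex] Hle.
set (U := fun D : (option Ety -> B) -> Prop => cylinder D /\
   L (fun psi => W (fun b => D (fun o => match o with Some j => psi (proj1_sig j) | None => b end)))).
assert (cW : forall D : (option Ety -> B) -> Prop, cylinder D -> cylinder (fun psi : E -> B => W (fun b => D (fun o => match o with Some j => psi (proj1_sig j) | None => b end)))).
{ intros D HD; exact (cyl_W (@proj1_sig E (sub_domain L B')) e0 W D HD). }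
assert (HU : cyl_ultrafilter U).
{ constructor.
  - intros C [HC _]; auto.
  - split; [apply cyl_True|]. apply (up' HL (uf_full HL) (cW _ cyl_True)).
    intros psi _. apply Wconst; auto.
  - intros [_ H]. apply (uf_proper HL). apply (up' HL H cyl_False).
    intros psi Hw. apply (Wconst W HW False); auto.
  - intros C D [HC1 HC2] HD HCD. split; auto. apply (up' HL HC2 (cW _ HD)).
    intros psi Hw. apply (w_up HW _ _ Hw). intros b; apply HCD.
  - intros C D [HC1 HC2] [HD1 HD2]. split. apply cyl_and; auto.
    apply (up' HL (uf_meet HL _ _ HC2 HD2) (cW _ (cyl_and _ _ HC1 HD1))).
    intros psi [a b]. apply (w_meet HW _ _ a b).
  - intros C HC. destruct (ultra' _ HL (cW _ HC)) as [H|H].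
    + left; split; auto.
    + right; split. apply cyl_not; auto. apply (up' HL H (cW _ (cyl_not _ HC))).
      intros psi Hn. destruct (w_ultra HW (fun b => C (fun o => match o with Some j => psi (proj1_sig j) | None => b end))); tauto. }
assert (Hproj : forall C, proj_opt U C <-> pullback (fun i : Ety => proj1_sig i) L C).
{ intros C. unfold proj_opt, pullback, U. split.
  - intros [HC [_ H]]. split; auto.
    apply (up' HL H (cyl_gen C (@proj1_sig _ _) (fun x => x) HC)).
    intros psi Hw. exact (proj1 (Wconst W HW _) Hw).
  - intros [HC H]. split; auto. split. exact (cyl_gen C Some (fun x => x) HC).
    apply (up' HL H (cW _ (cyl_gen C Some (fun x => x) HC))).
    intros psi Hw. exact (proj2 (Wconst W HW _) Hw). }
destruct (Hex Ety Hle (fun i => proj1_sig i) U HU Hproj) as [e He].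
assert (HeE : E' e).
{ assert (H : U (fun phi => B' (phi None))).
  { split. exact (cyl_map (fun l => match l with [x] => B' x | _ => False end) [None]).
    apply (up' HL (uf_full HL) (cW _ (cyl_map (fun l => match l with [x] => B' x | _ => False end) [None]))).
    intros psi _. exact (w_B' HW). }
  apply He in H. destruct H as [_ H]. exact H. }
assert (H : U (fun phi => phi None <> phi (Some (exist _ e HeE)))).
{ split. exact (cyl_map (fun l => match l with [x;y] => x <> y | _ => False end) [None; Some (exist _ e HeE)]).
  apply (up' HL (uf_full HL) (cW _ (cyl_map (fun l => match l with [x;y] => x <> y | _ => False end) [None; Some (exist _ e HeE)]))).
  intros psi _. exact (w_ne HW (psi e)). }
apply He in H. destruct H as [_ H]. apply (uf_proper HL).
apply (up' HL H cyl_False). simpl. intros psi Hn; apply Hn; reflexivity.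
Qed.

End Main.

From mathcomp Require filter.
Module UF.
Import mathcomp.classical.filter.
Lemma exists_W (B:Type) (B' : B -> Prop) :
  (~ exists l : list B, forall x, B' x -> In x l) ->
  exists W : (B -> Prop) -> Prop, W B' /\ (forall b, W (fun x => x <> b)) /\
    ~ W (fun _ => False) /\
    (forall X Y, W X -> (forall x, X x -> Y x) -> W Y) /\
    (forall X Y, W X -> W Y -> W (fun x => X x /\ Y x)) /\
    (forall X, W X \/ W (fun x => ~ X x)).
Proof.
intros Hinf.
set (F := fun A : B -> Prop => exists l : list B, forall x, B' x -> ~ In x l -> A x).
assert (FF : ProperFilter F).
{ assert (Filter F).
  { constructor.
    - exists nil; intros; exact I.
    - intros P Q [l1 H1] [l2 H2]; exists (l1 ++ l2); intros x Hx Hn; split.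
      + apply H1; auto; intro; apply Hn; apply in_or_app; auto.
      + apply H2; auto; intro; apply Hn; apply in_or_app; auto.
    - intros P Q PQ [l H]; exists l; intros; apply PQ; auto. }
  constructor; auto.
  intros [l Hl]. apply Hinf; exists l; intros x Hx.
  destruct (classic (In x l)) as [Hi|Hi]; auto; exfalso; exact (Hl x Hx Hi). }
destruct (ultraFilterLemma FF) as [G [GU FG]].
exists G.
assert (GP : ProperFilter G) by (destruct GU; auto).
assert (GF : Filter G) by (destruct GP; auto).
split; [|split; [|split; [|split; [|split]]]].
- apply FG; exists nil; auto.
- intros b; apply FG; exists (b :: nil); intros x Hx Hn E; apply Hn; left; auto.
- intro H; apply (filter_not_empty G); exact H.
- intros X Y HX HXY; exact (filterS HXY HX).
- intros X Y HX HY; exact (filterI HX HY).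
- intros X; exact (in_ultra_setVsetC X GU).
Qed.
End UF.

Theorem mainTheorem13 (B E : Type) (L : ((E -> B) -> Prop) -> Prop) (B' : B -> Prop) :
  infinite B ->
  gch_at B ->
  local_rep L ->
  card_eq E (pow (pow B)) ->
  exact_wrt (fun I : Type => lt_succ_pow B I) L ->
  infinite {b | B' b} ->
  local_rep (sub_rep L (sub_domain L B') B') /\
  regular (sub_rep L (sub_domain L B') B') /\
  card_eq {e | sub_domain L B' e} (pow (pow B)).
Proof.
intros Hinf Hg HL [hE [HhE Hsurj]] Hex HinfB'.
assert (Hb : exists b : {b | B' b}, True).
{ apply NNPP; intro H; apply HinfB'; exists nil; intros x; exfalso; apply H; exists x; auto. }
destruct Hb as [b0 _].
destruct (UF.exists_W B B') as [W [W1 [W2 [W3 [W4 [W5 W6]]]]]].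
{ intros [l Hl]. apply HinfB'.
  exists (flat_map (fun x => match excluded_middle_informative (B' x) with
                              | left h => (exist B' x h) :: nil | right _ => nil end) l).
  intros y. apply in_flat_map. exists (proj1_sig y). split. apply Hl; exact (proj2_sig y).
  destruct excluded_middle_informative as [h|h]. left; apply sig_eq; reflexivity.
  exfalso; exact (h (proj2_sig y)). }
assert (HW : wuf B' W) by (constructor; auto).
destruct (Hsurj (fun _ => True)) as [e0 _].
split; [exact (L'_uf B E L B' HL b0)|split].
- exact (regular_L' B E L B' HL b0 hE HhE Hg Hex).
- apply SB.
  + exists (fun e => hE (proj1_sig e)). apply inj_comp; auto. intros x y H; apply sig_eq; auto.
  + apply NNPP; intro Hn. apply (not_small B E L B' HL e0 W HW Hex).
    apply (gch_le B _ (fun e => hE (proj1_sig e))); auto.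
    apply inj_comp; auto. intros x y H; apply sig_eq; auto.
Qed.
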